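(* For all odd integers $n\ge1$ and real numbers $a\ge1$, $x\in(-1,1)$, we have $\Lambda_{n,a}(x)\ge 2(1+x)$. Equality holds if and only if $n=1$, $a=1$ (any $x$), or $n=3$, $a=1$, $x=0$.
   Context: $U_j$ denotes the Chebyshev polynomial of the second kind of degree $j$, i.e. $U_j(\cos t)=\sin((j+1)t)/\sin t$. For a real number $a$ and integers $0\le m$, $\binom{m+a}{m}=\frac{(a+1)(a+2)\cdots(a+m)}{m!}$ (equal to $1$ when $m=0$). For an integer $n\ge0$, $\Lambda_{n,a}(x)=\sum_{j=0}^n\binom{n+a-j}{n-j}U_j(x)$. *)

(* Defs.v *)
From Stdlib Require Import Reals.
Open Scope R_scope.

(* Chebyshev polynomial of the second kind, via the standard recurrence
   U_0 = 1, U_1 = 2x, U_{j+2} = 2x U_{j+1} - U_j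
   (equivalently U_j(cos t) = sin((j+1)t)/sin t). *)
Fixpoint chebU (j : nat) (x : R) : R :=
  match j with
  | O => 1
  | S j' =>
      match j' with
      | O => 2 * x
      | S j'' => 2 * x * chebU j' x - chebU j'' x
      end
  end.

(* gbinom m a = binom(m+a, m) = (a+1)(a+2)...(a+m)/m!  (= 1 for m = 0). *)
Fixpoint gbinom (m : nat) (a : R) : R :=
  match m with
  | O => 1
  | S m' => gbinom m' a * (a + INR (S m')) / INR (S m')
  end.

Definition Lambda (n : nat) (a x : R) : R :=
  sum_f_R0 (fun j => gbinom (n - j) a * chebU j x) n.

(* Main.v *)
Require Import Defs.
From Stdlib Require Import Reals Arith Lia Lra Psatz.
Open Scope R_scope.

Definition conv (f g : nat -> R) (n : nat) : R :=
  sum_f_R0 (fun j => f (n - j)%nat * g j) n.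

Lemma sum_rev h n : sum_f_R0 h n = sum_f_R0 (fun j => h (n - j)%nat) n.
Proof.
  induction n. reflexivity.
  rewrite tech5, IHn, (decomp_sum _ (S n)) by lia.
  simpl pred. rewrite Nat.sub_0_r. simpl. ring.
Qed.

Lemma conv_comm f g n : conv f g n = conv g f n.
Proof.
  unfold conv. rewrite sum_rev. apply sum_eq. intros i Hi.
  replace (n - (n - i))%nat with i by lia. ring.
Qed.

Lemma conv_step b e u :
  b 0%nat = e 0%nat -> (forall m, b (S m) = b m + e (S m)) ->
  forall n, conv b u (S n) = conv b u n + conv e u (S n).
Proof.
  intros Hb0 HbS n. unfold conv. rewrite !tech5.
  assert (H: sum_f_R0 (fun j => b (S n - j)%nat * u j) n =
     sum_f_R0 (fun j => b (n - j)%nat * u j) n + sum_f_R0 (fun j => e (S n - j)%nat * u j) n).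
  { rewrite <- sum_plus. apply sum_eq. intros i Hi.
    replace (S n - i)%nat with (S (n - i)) by lia. rewrite HbS. ring. }
  rewrite H, Nat.sub_diag, Hb0. ring.
Qed.

Lemma conv_partial b e u :
  b 0%nat = e 0%nat -> (forall m, b (S m) = b m + e (S m)) ->
  forall n, conv b u n = conv e (fun k => sum_f_R0 u k) n.
Proof.
  intros Hb0 HbS n. induction n.
  - unfold conv. simpl. rewrite Hb0. ring.
  - rewrite (conv_step b e u Hb0 HbS n), IHn.
    rewrite (conv_comm e (fun k => sum_f_R0 u k) (S n)).
    rewrite (conv_step (fun k => sum_f_R0 u k) u e); [| reflexivity | intro; apply tech5].
    rewrite (conv_comm _ e n), (conv_comm u e). ring.
Qed.

Lemma gb_K m a : gbinom m a * a = gbinom m (a-1) * (a + INR m).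
Proof.
  induction m. simpl; ring.
  cbn [gbinom]. rewrite S_INR.
  assert (H: INR m + 1 <> 0) by (pose proof (pos_INR m); lra).
  replace (gbinom m a * (a + (INR m + 1)) / (INR m + 1) * a) with
    ((gbinom m a * a) * (a + (INR m + 1)) / (INR m + 1)) by (field; auto).
  rewrite IHm. field. auto.
Qed.

Lemma gb_pascal m a : gbinom (S m) a = gbinom m a + gbinom (S m) (a-1).
Proof.
  cbn [gbinom]. rewrite S_INR.
  assert (H: INR m + 1 <> 0) by (pose proof (pos_INR m); lra).
  replace (gbinom m (a - 1) * (a - 1 + (INR m + 1))) with (gbinom m a * a)
    by (rewrite gb_K; ring).
  field. auto.
Qed.

Lemma gb_nonneg m b : -1 <= b -> 0 <= gbinom m b.
Proof.
  intro Hb. induction m. simpl; lra.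
  cbn [gbinom]. rewrite S_INR. pose proof (pos_INR m).
  unfold Rdiv. apply Rmult_le_pos; [apply Rmult_le_pos; lra|].
  left; apply Rinv_0_lt_compat; lra.
Qed.

Lemma gb_1 b : gbinom 1 b = b + 1.
Proof. simpl. field. Qed.

Lemma sum_ge_last f N : (forall i, 0 <= f i) -> sum_f_R0 f N >= f N.
Proof.
  intro H. destruct N. simpl; lra.
  rewrite tech5. pose proof (cond_pos_sum f N H). lra.
Qed.

Section Cheb.
Variable x : R.
Notation U j := (chebU j x).

Lemma U_SS j : U (S (S j)) = 2*x*U (S j) - U j.
Proof. reflexivity. Qed.

Lemma U_inv j : U j ^ 2 - 2*x*U j * U (S j) + U (S j) ^ 2 = 1.
Proof.
  induction j. simpl; ring.
  rewrite U_SS. nra.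
Qed.

Lemma U_step j : -1 <= x <= 1 -> U (S (S j)) - U j <= 2.
Proof.
  intro Hx. assert (Hd: (U (S (S j)) - U j)^2 <= 4).
  { pose proof (U_inv j). rewrite U_SS.
    assert (0 <= (1 - x^2) * U (S j)^2) by (apply Rmult_le_pos; nra).
    nra. }
  nra.
Qed.

Lemma U_lt : -1 < x < 1 -> forall k, U (S k) < INR k + 2 /\ U (S (S k)) < INR k + 3.
Proof.
  intros Hx k. induction k.
  - simpl. split; [lra|]. assert (x*x < 1) by (destruct Hx; nra). lra.
  - destruct IHk as [H1 H2]. split. rewrite S_INR; lra.
    pose proof (U_step (S k) ltac:(split; lra)). rewrite S_INR. lra.
Qed.

Lemma PU_closed k : 2*(1-x) * sum_f_R0 (fun j => U j) k = 1 + U k - U (S k).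
Proof.
  induction k. simpl; ring.
  rewrite tech5, Rmult_plus_distr_l, IHk, U_SS. ring.
Qed.

Lemma PPU_closed n : 2*(1-x) * sum_f_R0 (fun k => sum_f_R0 (fun j => U j) k) n
   = INR n + 2 - U (S n).
Proof.
  induction n. simpl; ring.
  rewrite tech5, Rmult_plus_distr_l, IHn, PU_closed, U_SS, S_INR. ring.
Qed.

Definition E j := INR j + 1 - U j - 4*(1-x^2).

Lemma E_step j : -1 <= x <= 1 -> E (S (S j)) >= E j.
Proof.
  intro Hx. unfold E. pose proof (U_step j Hx). rewrite !S_INR. lra.
Qed.

Lemma E2 : E 2 = 0.
Proof. unfold E; simpl; ring. Qed.

Lemma E4 : E 4 = 16*x^2*(1-x^2).
Proof. unfold E; simpl; ring. Qed.

Lemma E6 : -1 < x < 1 -> E 6 > 0.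
Proof.
  intro Hx. replace (E 6) with ((1-x^2)*(64*x^4-16*x^2+4)) by (unfold E; simpl; ring).
  assert (0 < 1 - x^2) by nra.
  assert (0 < 64*x^4-16*x^2+4) by nra.
  nra.
Qed.

Lemma E_nonneg q : -1 < x < 1 -> 0 <= E (2 + 2*q).
Proof.
  intro Hx. induction q. simpl. rewrite E2; lra.
  replace (2 + 2 * S q)%nat with (S (S (2 + 2*q))) by lia.
  pose proof (E_step (2+2*q) ltac:(split; lra)). lra.
Qed.

Lemma E_pos q : -1 < x < 1 -> 0 < E (6 + 2*q).
Proof.
  intro Hx. induction q. simpl. pose proof (E6 Hx); lra.
  replace (6 + 2 * S q)%nat with (S (S (6 + 2*q))) by lia.
  pose proof (E_step (6+2*q) ltac:(split; lra)). lra.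
Qed.

End Cheb.

Theorem theorem4p2 :
  forall (n : nat) (a x : R),
    Nat.Odd n -> 1 <= a -> -1 < x < 1 ->
    Lambda n a x >= 2 * (1 + x) /\
    (Lambda n a x = 2 * (1 + x) <->
       ((n = 1%nat /\ a = 1) \/ (n = 3%nat /\ a = 1 /\ x = 0))).
Proof.
  intros n a x Hodd Ha Hx. destruct Hodd as [m Hm].
  set (PP := fun k => sum_f_R0 (fun k0 => sum_f_R0 (fun j => chebU j x) k0) k).
  assert (Hconv : Lambda n a x = conv (fun i => gbinom i (a-1-1)) PP n).
  { unfold Lambda.
    change (conv (fun i => gbinom i a) (fun j => chebU j x) n = conv (fun i => gbinom i (a-1-1)) PP n).
    rewrite (conv_partial (fun i => gbinom i a) (fun i => gbinom i (a-1))); [| reflexivity | intro; apply gb_pascal].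
    rewrite (conv_partial (fun i => gbinom i (a-1)) (fun i => gbinom i (a-1-1))); [| reflexivity | intro; apply gb_pascal].
    reflexivity. }
  assert (HPP : forall j, 2*(1-x) * PP j = INR j + 2 - chebU (S j) x) by (intro; apply PPU_closed).
  assert (HPPpos : forall j, 0 < PP j).
  { intro j. pose proof (HPP j). destruct (U_lt x Hx j) as [H1 _].
    assert (0 < 2*(1-x) * PP j) by lra.
    assert (0 < 2*(1-x)) by lra.
    apply (Rmult_lt_reg_l (2*(1-x))); lra. }
  assert (Hgb : forall i, 0 <= gbinom i (a-1-1)) by (intro; apply gb_nonneg; lra).
  assert (Hlow : Lambda n a x >= PP n + (a-1) * PP (2*m)%nat).
  { rewrite Hconv. subst n. replace (2*m+1)%nat with (S (2*m)) by lia.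
    unfold conv. rewrite tech5, Nat.sub_diag.
    pose proof (sum_ge_last (fun j => gbinom (S (2*m) - j) (a-1-1) * PP j) (2*m)) as H.
    cbv beta in H. replace (S (2*m) - 2*m)%nat with 1%nat in H by lia.
    rewrite gb_1 in H.
    assert (Hs: forall i, 0 <= gbinom (S (2*m) - i) (a-1-1) * PP i)
      by (intro i; apply Rmult_le_pos; [apply Hgb | left; apply HPPpos]).
    specialize (H Hs). replace (gbinom 0 (a-1-1)) with 1 by reflexivity.
    replace (a - 1 - 1 + 1) with (a-1) in H by ring. lra. }
  assert (HE : 2*(1-x) * (PP n - 2*(1+x)) = E x (2 + 2*m)).
  { unfold E. rewrite Rmult_minus_distr_l, HPP. subst n.
    replace (S (2*m+1)) with (2+2*m)%nat by lia.
    replace (INR (2*m+1)) with (INR (2+2*m) - 1) by (rewrite !plus_INR, !mult_INR; simpl; ring).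
    ring. }
  assert (Hq : 0 < 2*(1-x)) by lra.
  assert (HPPn : PP n >= 2*(1+x)).
  { pose proof (E_nonneg x m Hx). assert (0 <= 2*(1-x)*(PP n - 2*(1+x))) by lra.
    assert (0 <= PP n - 2*(1+x)).
    { destruct (Rle_or_lt 0 (PP n - 2*(1+x))) as [h|h]; auto. nra. }
    lra. }
  assert (H2m : 0 < PP (2*m)%nat) by apply HPPpos.
  assert (Hnn : 0 <= (a-1) * PP (2*m)%nat) by (apply Rmult_le_pos; lra).
  split. lra.
  split.
  - intro Heq.
    assert (Ha1 : a = 1).
    { assert ((a-1) * PP (2*m)%nat <= 0) by lra.
      destruct (Rle_or_lt a 1); [lra|]. nra. }
    assert (HE0 : E x (2 + 2*m) <= 0).
    { rewrite <- HE. assert (PP n - 2*(1+x) <= 0) by lra. nra. }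
    destruct m as [|[|m']].
    + left. split; [lia | exact Ha1].
    + right. split; [lia|]. split; [exact Ha1|].
      simpl in HE0. rewrite E4 in HE0.
      assert (0 < 1 - x^2) by nra. assert (x^2 <= 0) by nra. destruct (Rtotal_order x 0) as [h|[h|h]]; [nra|exact h|nra].
    + exfalso. pose proof (E_pos x m' Hx).
      replace (2 + 2 * S (S m'))%nat with (6 + 2*m')%nat in HE0 by lia. lra.
  - intros [[-> ->] | [-> [-> ->]]].
    + unfold Lambda. simpl. field.
    + unfold Lambda. simpl. field.
Qed.
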